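(* Let $(E\to M,\rho,\langle\cdot,\cdot\rangle,[\cdot,\cdot])$ be a Courant algebroid, $\mathcal{G}$ a generalized metric and $\operatorname{div}$ a divergence operator on $E$, and let $D$ be a metric generalized connection with divergence $\operatorname{div}$ and pure-type torsion, with total generalized Ricci curvature $\mathrm{Ric}$. Then $\mathrm{Ric}(a,\mathcal{G}b)=-\mathrm{Ric}(\mathcal{G}a,b)$ for all $a,b\in\Gamma(E)$. In particular, $\mathrm{Ric}'_{\mathrm{GF}}$ is skew-symmetric if and only if $\mathrm{Ric}$ is symmetric.
   Context: A Courant algebroid $(E\to M,\rho,\langle\cdot,\cdot\rangle,[\cdot,\cdot])$: vector bundle $E$ with nondegenerate symmetric form, anchor $\rho:E\to TM$ and bracket on $\Gamma(E)$ with $[a,[b,c]]=[[a,b],c]+[b,[a,c]]$, $\mathcal{L}_{\rho a}\langle b,c\rangle=\langle[a,b],c\rangle+\langle b,[a,c]\rangle$, $2[a,a]=\rho^*d\langle a,a\rangle$. A generalized connection is a linear $D:\Gamma(E)\to\Gamma(E^*\otimes E)$ with $D(fa)=fDa+\rho^*df\otimes a$ and $\rho^*d\langle a,b\rangle=\langle Da,b\rangle+\langle a,Db\rangle$; $D_ba:=(Da)(b)$, $(Da)^*$ is the adjoint of $b\mapsto D_ba$. Naive curvature $\mathcal{R}_0(a,b)c:=D_aD_bc-D_bD_ac-D_{[a,b]}c$. A generalized metric is a self-adjoint $\mathcal{G}\in\operatorname{End}E$ with $\mathcal{G}^2=1$; $V_\pm=\ker(\mathcal{G}\mp1)$, $x_\pm:=\tfrac12(1\pm\mathcal{G})x$.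 $D$ is metric if it preserves $\Gamma(V_\pm)$. A divergence operator is linear $\operatorname{div}:\Gamma(E)\to C^\infty(M)$ with $\operatorname{div}(fa)=f\operatorname{div}a+\mathcal{L}_{\rho a}f$; $D$ has divergence $\operatorname{div}$ if $\operatorname{div}a=\operatorname{tr}(Da)$. Torsion $T(a,b):=D_ab-D_ba-[a,b]+(Da)^*b\in\Gamma(\wedge^3E^* )$ is of pure type if $T\in\Gamma(\wedge^3V_+\oplus\wedge^3V_-)$. Total curvature $\mathcal{R}(a,b):=\mathcal{R}_0(a_+,b_-)+\mathcal{R}_0(a_-,b_+)$; total generalized Ricci curvature $\mathrm{Ric}(a,b):=\operatorname{tr}(c\mapsto\mathcal{R}(c,a)b)$. $\mathrm{Ric}^\pm_{\mathrm{GF}}(a_\mp,b_\pm)$ is the trace of $V_\pm\to V_\pm$, $c_\pm\mapsto\mathcal{R}_0(c_\pm,a_\mp)b_\pm$, and $\mathrm{Ric}'_{\mathrm{GF}}(a,b):=\mathrm{Ric}^+_{\mathrm{GF}}(a_-,b_+)-\mathrm{Ric}^-_{\mathrm{GF}}(a_+,b_-)$. *)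

(* Defs.v *)
(* Algebraic (Serre–Swan style) model of a Courant algebroid:
   A  = algebra of functions C^oo(M) (a commutative algebra over the scalars R),
   V  = Gamma(E), an A-module which is finitely generated projective, witnessed
        by a dual basis (e_i, phi_i), used to define traces;
   vector fields = R-linear derivations of A. *)
From HB Require Import structures.
From mathcomp Require Import all_boot all_order all_algebra.
Set Implicit Arguments. Unset Strict Implicit. Unset Printing Implicit Defensive.
Import Order.TTheory GRing.Theory Num.Theory.
Local Open Scope ring_scope.

Section CourantDefs.
Variables (R : numFieldType) (A : comAlgType R) (V : lmodType A).

Definition Rlinear (T : V -> V) :=
  forall (k : R) (x y : V), T (k%:A *: x + y) = k%:A *: T x + T y.

Definition Alinear (T : V -> V) :=
  forall (f : A) (x y : V), T (f *: x + y) = f *: T x + T y.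

Definition Alinear_form (phi : V -> A) :=
  forall (f : A) (x y : V), phi (f *: x + y) = f * phi x + phi y.

Definition is_vector_field (X : A -> A) :=
  (forall (k : R) (f h : A), X (k *: f + h) = k *: X f + X h) /\
  (forall f h : A, X (f * h) = X f * h + f * X h).

(* dual basis: V is finitely generated projective (sections of a vector bundle) *)
Definition dual_basis (n : nat) (e : 'I_n -> V) (phi : 'I_n -> V -> A) :=
  (forall i, Alinear_form (phi i)) /\
  (forall v : V, v = \sum_(i < n) phi i v *: e i).

Definition trace (n : nat) (e : 'I_n -> V) (phi : 'I_n -> V -> A)
  (T : V -> V) : A := \sum_(i < n) phi i (T (e i)).

(* Courant algebroid structure (g = <.,.>, rho = anchor, br = bracket).
   rho^* df is the element with <rho^* df, c> = rho(c) f. *)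
Definition is_Courant (g : V -> V -> A) (rho : V -> A -> A)
  (br : V -> V -> V) :=
  [/\ (forall a b, g a b = g b a) /\ (forall a, Alinear_form (g a)),
      (forall phi, Alinear_form phi -> exists v, forall w, g v w = phi w) /\
      (forall v, (forall w, g v w = 0) -> v = 0),
      (forall (f : A) a b h, rho (f *: a + b) h = f * rho a h + rho b h) /\
      (forall a, is_vector_field (rho a)),
      (forall a, Rlinear (br a)) /\ (forall c, Rlinear (fun a => br a c)) &
      [/\ forall a b c, br a (br b c) = br (br a b) c + br b (br a c),
          forall a b c, rho a (g b c) = g (br a b) c + g b (br a c) &
          forall a c, g (br a a *+ 2) c = rho c (g a a)]].

Definition is_gen_metric (g : V -> V -> A) (G : V -> V) :=
  [/\ Alinear G, forall a b, g (G a) b = g a (G b) & forall a, G (G a) = a].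

Definition pp (G : V -> V) (x : V) : V := (2^-1 : R)%:A *: (x + G x).
Definition pm (G : V -> V) (x : V) : V := (2^-1 : R)%:A *: (x - G x).

Definition is_divergence (rho : V -> A -> A) (div : V -> A) :=
  (forall (k : R) a b, div (k%:A *: a + b) = k%:A * div a + div b) /\
  (forall (f : A) a, div (f *: a) = f * div a + rho a f).

(* generalized connection; D b a stands for D_b a = (Da)(b) *)
Definition is_gen_connection (g : V -> V -> A) (rho : V -> A -> A)
  (D : V -> V -> V) :=
  [/\ forall a, Alinear (fun b => D b a),
      forall b, Rlinear (D b),
      forall (f : A) a b, D b (f *: a) = f *: D b a + rho b f *: a &
      forall a b c, rho c (g a b) = g (D c a) b + g a (D c b)].

(* metric: preserves Gamma(V_+) and Gamma(V_-) *)
Definition is_metric_conn (G : V -> V) (D : V -> V -> V) :=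
  forall c a, G (D c (pp G a)) = D c (pp G a) /\
              G (D c (pm G a)) = - D c (pm G a).

Definition has_divergence (n : nat) (e : 'I_n -> V) (phi : 'I_n -> V -> A) (D : V -> V -> V) (div : V -> A) :=
  forall a, div a = trace e phi (fun b => D b a).

(* <T(a,b), c> with T(a,b) = D_a b - D_b a - [a,b] + (Da)^* b,
   where <(Da)^* b, c> = <b, D_c a> *)
Definition torsion3 (g : V -> V -> A) (br : V -> V -> V) (D : V -> V -> V)
  (a b c : V) : A :=
  g (D a b - D b a - br a b) c + g b (D c a).

(* T in Gamma(wedge^3 V_+ (+) wedge^3 V_-) *)
Definition pure_type_torsion g br D (G : V -> V) :=
  forall a b c, torsion3 g br D a b c =
    torsion3 g br D (pp G a) (pp G b) (pp G c) +
    torsion3 g br D (pm G a) (pm G b) (pm G c).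

Definition R0 (br : V -> V -> V) (D : V -> V -> V) (a b c : V) : V :=
  D a (D b c) - D b (D a c) - D (br a b) c.

Definition Rtot br D (G : V -> V) (a b c : V) : V :=
  R0 br D (pp G a) (pm G b) c + R0 br D (pm G a) (pp G b) c.

Definition Ric (n : nat) (e : 'I_n -> V) (phi : 'I_n -> V -> A) br D G (a b : V) : A :=
  trace e phi (fun c => Rtot br D G c a b).

(* trace over V_+ (resp. V_-): dual basis (pp e_i, phi_i|V_+) *)
Definition RicGF' (n : nat) (e : 'I_n -> V) (phi : 'I_n -> V -> A) br D G (a b : V) : A :=
  trace e phi (fun c => R0 br D (pp G c) (pm G a) (pp G b)) -
  trace e phi (fun c => R0 br D (pm G c) (pp G a) (pm G b)).

End CourantDefs.

(* Main.v *)
Require Import Defs.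
From HB Require Import structures.
From mathcomp Require Import all_boot all_order all_algebra.
From mathcomp Require Import ring.
Import GRing.Theory Num.Theory.
Local Open Scope ring_scope.

Lemma addf0 (U W : zmodType) (f : U -> W) :
  (forall x y, f (x + y) = f x + f y) -> f 0 = 0.
Proof. move=> H; have h := H 0 0; rewrite addr0 in h.
by apply: (addrI (f 0)); rewrite -h addr0. Qed.

Lemma addfN (U W : zmodType) (f : U -> W) :
  (forall x y, f (x + y) = f x + f y) -> forall x, f (- x) = - f x.
Proof. move=> H x; apply: (addrI (f x)); by rewrite -H !subrr (addf0 _ _ _ H). Qed.

Arguments addf0 {U W f}.
Arguments addfN {U W f}.

Section S.
Variables (R : numFieldType) (A : comAlgType R) (V : lmodType A).
Variables (n : nat) (e : 'I_n -> V) (phi : 'I_n -> V -> A)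
  (g : V -> V -> A) (rho : V -> A -> A) (br : V -> V -> V)
  (G : V -> V) (D : V -> V -> V).
Hypotheses (Hdb : dual_basis e phi) (HC : is_Courant g rho br)
  (HG : is_gen_metric g G) (HD : is_gen_connection g rho D)
  (HM : is_metric_conn G D).

Let h : A := (2^-1 : R)%:A.
Lemma hh : h + h = 1.
Proof. by rewrite /h -scalerDl -[in RHS](scale1r (1 : A)) {3}(splitr (1 : R)) mul1r. Qed.

Lemma halfA (t : A) : t + t = 0 -> t = 0.
Proof. move=> H. by rewrite -[t]mul1r -hh mulrDl -mulrDr H mulr0. Qed.

Lemma halfeq (t s : A) : t + t = s + s -> t = s.
Proof. move=> H; apply/eqP; rewrite -subr_eq0; apply/eqP/halfA.
by rewrite addrACA H -opprD subrr. Qed.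

Lemma gsym a b : g a b = g b a.
Proof. by case: HC => [[]]. Qed.
Lemma g2lin a : Alinear_form (g a).
Proof. by case: HC => [[]]. Qed.
Lemma g2D a x y : g a (x + y) = g a x + g a y.
Proof. by rewrite -[x]scale1r g2lin mul1r scale1r. Qed.
Lemma g20 a : g a 0 = 0.
Proof. exact: addf0 (g2D a). Qed.
Lemma g2Z a f x : g a (f *: x) = f * g a x.
Proof. by rewrite -[f *: x]addr0 g2lin g20 addr0. Qed.
Lemma g2N a x : g a (- x) = - g a x.
Proof. exact: (addfN (g2D a) x). Qed.
Lemma g1D a x y : g (x + y) a = g x a + g y a.
Proof. by rewrite !(gsym _ a) g2D. Qed.
Lemma g1Z a f x : g (f *: x) a = f * g x a.
Proof. by rewrite !(gsym _ a) g2Z. Qed.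
Lemma g1N a x : g (- x) a = - g x a.
Proof. by rewrite !(gsym _ a) g2N. Qed.
Lemma g10 a : g 0 a = 0.
Proof. by rewrite gsym g20. Qed.

Lemma nondeg u v : (forall d, g u d = g v d) -> u = v.
Proof. move=> H; apply/eqP; rewrite -subr_eq0; apply/eqP.
case: HC => _ [_ nd] _ _ _; apply: nd => w.
by rewrite g1D g1N H subrr. Qed.

Lemma rhoVF a : is_vector_field (rho a).
Proof. by case: HC => _ _ [_ ?] _ _. Qed.
Lemma rhoD a x y : rho a (x + y) = rho a x + rho a y.
Proof. by case: (rhoVF a) => H _; have := H 1 x y; rewrite !scale1r. Qed.
Lemma rho0 a : rho a 0 = 0.
Proof. exact: addf0 (rhoD a). Qed.
Lemma rhoN a x : rho a (- x) = - rho a x.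
Proof. exact: (addfN (rhoD a) x). Qed.
Lemma rhoM a x y : rho a (x * y) = rho a x * y + x * rho a y.
Proof. by case: (rhoVF a). Qed.

Lemma br2D a x y : br a (x + y) = br a x + br a y.
Proof. case: HC => _ _ _ [H _] _.
by have := H a 1 x y; rewrite !scale1r. Qed.
Lemma br1D a x y : br (x + y) a = br x a + br y a.
Proof. case: HC => _ _ _ [_ H] _.
by have := H a 1 x y; rewrite !scale1r. Qed.
Lemma br2N a x : br a (- x) = - br a x.
Proof. exact: (addfN (br2D a) x). Qed.
Lemma br1N a x : br (- x) a = - br x a.
Proof. exact: (addfN (fun x y => br1D a x y) x). Qed.

Lemma inv a b c : rho a (g b c) = g (br a b) c + g b (br a c).
Proof. by case: HC => _ _ _ _ [_ ? _]. Qed.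

Lemma polar u v d : g (br u v) d + g (br v u) d = rho d (g u v).
Proof.
case: HC => _ _ _ _ [_ _ sq].
have E := sq (u + v) d; have Eu := sq u d; have Ev := sq v d.
rewrite mulr2n in E Eu Ev.
rewrite !br1D !br2D !g1D !g2D !(gsym v u) !rhoD in E.
rewrite !g1D in Eu Ev.
apply: halfeq.
have -> : g (br u v) d + g (br v u) d + (g (br u v) d + g (br v u) d) =
  (g (br u u) d + g (br u v) d + (g (br v u) d + g (br v v) d) +
   (g (br u u) d + g (br u v) d + (g (br v u) d + g (br v v) d)))
  - (g (br u u) d + g (br u u) d) - (g (br v v) d + g (br v v) d) by ring.
rewrite E Eu Ev; ring.
Qed.

Lemma leib a f b : br a (f *: b) = f *: br a b + rho a f *: b.
Proof.
apply: nondeg => c.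
have E := inv a (f *: b) c.
rewrite g1Z rhoM inv in E.
rewrite g1D !g1Z.
apply: (addIr (g (f *: b) (br a c))).
rewrite -E g1Z; ring.
Qed.

Lemma leib1 x y f : g x y = 0 -> br (f *: x) y = f *: br x y + (- rho y f) *: x.
Proof.
move=> gxy; apply: nondeg => d.
have P1 := polar (f *: x) y d.
have P2 := polar x y d.
rewrite gxy rho0 in P2.
rewrite g1Z gxy mulr0 rho0 leib g1D !g1Z in P1.
rewrite g1D !g1Z.
have -> : g (br x y) d = - g (br y x) d.
  by apply/eqP; rewrite -subr_eq0 opprK P2.
apply: (addIr (f * g (br y x) d + rho y f * g x d)).
rewrite P1; ring.
Qed.


Lemma DsD x y z : D (x + y) z = D x z + D y z.
Proof. by case: HD => H _ _ _; have := H z 1 x y; rewrite !scale1r. Qed.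
Lemma Ds0 z : D 0 z = 0.
Proof. exact: (addf0 (fun x y => DsD x y z)). Qed.
Lemma DsZ f x z : D (f *: x) z = f *: D x z.
Proof. by case: HD => H _ _ _; have := H z f x 0; rewrite !addr0 Ds0 addr0. Qed.
Lemma DsN x z : D (- x) z = - D x z.
Proof. exact: (addfN (fun x y => DsD x y z) x). Qed.
Lemma DD b x y : D b (x + y) = D b x + D b y.
Proof. by case: HD => _ H _ _; have := H b 1 x y; rewrite !scale1r. Qed.
Lemma D0 b : D b 0 = 0.
Proof. exact: (addf0 (DD b)). Qed.
Lemma DN b x : D b (- x) = - D b x.
Proof. exact: (addfN (DD b) x). Qed.
Lemma Dleib b f a : D b (f *: a) = f *: D b a + rho b f *: a.
Proof. by case: HD. Qed.

Lemma br10 y : br 0 y = 0.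
Proof. exact: (addf0 (fun a b => br1D y a b)). Qed.

Lemma Glin : Alinear G. Proof. by case: HG. Qed.
Lemma Gsa a b : g (G a) b = g a (G b). Proof. by case: HG. Qed.
Lemma Ginv a : G (G a) = a. Proof. by case: HG. Qed.
Lemma GD x y : G (x + y) = G x + G y.
Proof. by have := Glin 1 x y; rewrite !scale1r. Qed.
Lemma G0 : G 0 = 0. Proof. exact: (addf0 GD). Qed.
Lemma GZ f x : G (f *: x) = f *: G x.
Proof. by have := Glin f x 0; rewrite !addr0 G0 addr0. Qed.
Lemma GN x : G (- x) = - G x. Proof. exact: (addfN GD x). Qed.

Lemma ppE x : pp G x = h *: (x + G x). Proof. by []. Qed.
Lemma pmE x : pm G x = h *: (x - G x). Proof. by []. Qed.

Ltac gexp := apply: nondeg => d; rewrite ?(g1D, g1N, g1Z, g10).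

Lemma ppG x : pp G (G x) = pp G x.
Proof. by rewrite !ppE Ginv addrC. Qed.
Lemma pmG x : pm G (G x) = - pm G x.
Proof. by rewrite !pmE Ginv -scalerN opprB. Qed.
Lemma Gpp x : G (pp G x) = pp G x.
Proof. by rewrite ppE GZ GD Ginv addrC. Qed.
Lemma Gpm x : G (pm G x) = - pm G x.
Proof. by rewrite pmE GZ GD GN Ginv -scalerN opprB. Qed.
Lemma pp_pm x : pp G x + pm G x = x.
Proof. rewrite ppE pmE; gexp.
by transitivity ((h + h) * g x d); [ring | rewrite hh mul1r]. Qed.
Lemma fixp v : G v = v -> pp G v = v /\ pm G v = 0.
Proof. move=> Hv; rewrite ppE pmE Hv subrr scaler0; split=> //; gexp.
by transitivity ((h + h) * g v d); [ring | rewrite hh mul1r]. Qed.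
Lemma fixm v : G v = - v -> pp G v = 0 /\ pm G v = v.
Proof. move=> Hv; rewrite ppE pmE Hv subrr scaler0; split=> //; gexp.
by transitivity ((h + h) * g v d); [ring | rewrite hh mul1r]. Qed.
Arguments fixp {v}.
Arguments fixm {v}.
Lemma pplin : Alinear (pp G).
Proof. move=> f x y; rewrite !ppE GD GZ; gexp; ring. Qed.
Lemma pmlin : Alinear (pm G).
Proof. move=> f x y; rewrite !pmE GD GZ; gexp; ring. Qed.
Lemma gppm x y : g (pp G x) (pm G y) = 0.
Proof. apply: halfA. rewrite -{1}[pp G x]Gpp Gsa Gpm g2N. by rewrite addNr. Qed.
Lemma gpmpp x y : g (pm G x) (pp G y) = 0.
Proof. by rewrite gsym gppm. Qed.

Lemma Alin0 (T : V -> V) : Alinear T -> T 0 = 0.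
Proof. move=> HT; apply: (addf0 (f := T)) => x y.
by have := HT 1 x y; rewrite !scale1r. Qed.

Lemma R0tens (X : V -> V) y z : Alinear X -> (forall c, g (X c) y = 0) ->
  Alinear (fun c => R0 br D (X c) y z).
Proof.
move=> HX Hxy f c c' /=. rewrite HX. have gxy := Hxy c.
rewrite /R0 !DsD !DsZ DD Dleib br1D leib1 // !DsD !DsZ.
gexp; ring.
Qed.

Lemma Gm v : G v = - v -> forall x, G (D x v) = - D x v.
Proof. move=> Hv x; have := (HM x v).2; by rewrite (fixm Hv).2. Qed.
Lemma Gp v : G v = v -> forall x, G (D x v) = D x v.
Proof. move=> Hv x; have := (HM x v).1; by rewrite (fixp Hv).1. Qed.

Arguments Gm {v}.
Arguments Gp {v}.
Lemma R0m x y b : G (R0 br D x y (pm G b)) = - R0 br D x y (pm G b).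
Proof.
have H1 := Gm (Gpm b).
rewrite /R0 !GD !GN (Gm (H1 y)) (Gm (H1 x)) H1; gexp; ring.
Qed.
Lemma R0p x y b : G (R0 br D x y (pp G b)) = R0 br D x y (pp G b).
Proof.
have H1 := Gp (Gpp b).
rewrite /R0 !GD !GN (Gp (H1 y)) (Gp (H1 x)) H1 //.
Qed.

Lemma R0_3D x y z1 z2 : R0 br D x y (z1 + z2) = R0 br D x y z1 + R0 br D x y z2.
Proof. rewrite /R0 !DD; gexp; ring. Qed.
Lemma R0_3N x y z : R0 br D x y (- z) = - R0 br D x y z.
Proof. rewrite /R0 !DN; gexp; ring. Qed.
Lemma R0_2N x y z : R0 br D x (- y) z = - R0 br D x y z.
Proof. rewrite /R0 !DsN DN br2N DsN; gexp; ring. Qed.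
Lemma R0_10 y z : R0 br D 0 y z = 0.
Proof. by rewrite /R0 !Ds0 br10 Ds0 D0 !subrr. Qed.


Lemma phil i : Alinear_form (phi i). Proof. by case: Hdb. Qed.
Lemma dec v : v = \sum_(i < n) phi i v *: e i. Proof. by case: Hdb. Qed.
Lemma phiD i x y : phi i (x + y) = phi i x + phi i y.
Proof. by have := phil i 1 x y; rewrite scale1r mul1r. Qed.
Lemma phi0 i : phi i 0 = 0. Proof. exact: (addf0 (phiD i)). Qed.
Lemma phiN i x : phi i (- x) = - phi i x. Proof. exact: (addfN (phiD i) x). Qed.
Lemma phiZ i f x : phi i (f *: x) = f * phi i x.
Proof. by have := phil i f x 0; rewrite !addr0 phi0 addr0. Qed.

Lemma sumlin (T : V -> V) (F : 'I_n -> A) (v : 'I_n -> V) : Alinear T ->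
  T (\sum_(i < n) F i *: v i) = \sum_(i < n) F i *: T (v i).
Proof.
move=> HT; apply: (big_ind2 (fun a b => T a = b)).
- exact: Alin0 _ HT.
- by move=> x1 x2 y1 y2 <- <-; have := HT 1 x1 y1; rewrite !scale1r.
- by move=> i _; have := HT (F i) (v i) 0; rewrite !addr0 (Alin0 _ HT) addr0.
Qed.
Lemma phisum j (F : 'I_n -> A) (v : 'I_n -> V) :
  phi j (\sum_(i < n) F i *: v i) = \sum_(i < n) F i * phi j (v i).
Proof.
apply: (big_ind2 (fun a b => phi j a = b)).
- exact: phi0.
- by move=> x1 x2 y1 y2 <- <-; rewrite phiD.
- by move=> i _; rewrite phiZ.
Qed.

Lemma cyc (X Y : V -> V) : Alinear X -> Alinear Y ->
  trace e phi (fun c => X (Y c)) = trace e phi (fun c => Y (X c)).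
Proof.
move=> HX HY; rewrite /trace.
transitivity (\sum_(i < n) \sum_(j < n) phi j (Y (e i)) * phi i (X (e j))).
  by apply: eq_bigr => i _; rewrite {1}(dec (Y (e i))) sumlin // phisum.
rewrite exchange_big; apply: eq_bigr => j _.
rewrite [in RHS](dec (X (e j))) sumlin // phisum.
by apply: eq_bigr => i _; rewrite mulrC.
Qed.

Lemma trace_ext (T1 T2 : V -> V) : (forall c, T1 c = T2 c) ->
  trace e phi T1 = trace e phi T2.
Proof. by move=> H; rewrite /trace; apply: eq_bigr => i _; rewrite H. Qed.
Lemma traceD (T1 T2 : V -> V) :
  trace e phi (fun c => T1 c + T2 c) = trace e phi T1 + trace e phi T2.
Proof. by rewrite /trace -big_split; apply: eq_bigr => i _; rewrite phiD. Qed.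
Lemma traceN (T : V -> V) :
  trace e phi (fun c => - T c) = - trace e phi T.
Proof. by rewrite /trace -sumrN; apply: eq_bigr => i _; rewrite phiN. Qed.

Lemma vanish (P T : V -> V) : Alinear P -> Alinear T ->
  (forall c, P (T c) = T c) -> (forall c, T (P c) = 0) -> trace e phi T = 0.
Proof.
move=> HP HT HPT HTP.
transitivity (trace e phi (fun c => P (T c))).
  by apply: trace_ext => c; rewrite HPT.
rewrite cyc // /trace big1 // => i _.
by rewrite HTP phi0.
Qed.

Definition Pt a b := trace e phi (fun c => R0 br D (pp G c) (pm G a) (pp G b)).
Definition Mt a b := trace e phi (fun c => R0 br D (pm G c) (pp G a) (pm G b)).

Lemma RicE a b : Ric e phi br D G a b = Pt a b + Mt a b.
Proof.
rewrite /Ric /Rtot.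
transitivity (trace e phi (fun c =>
  (R0 br D (pp G c) (pm G a) (pp G b) + R0 br D (pm G c) (pp G a) (pm G b)) +
  (R0 br D (pp G c) (pm G a) (pm G b) + R0 br D (pm G c) (pp G a) (pp G b)))).
  apply: trace_ext => c.
  rewrite -{1 2}[b]pp_pm !R0_3D; gexp; ring.
rewrite traceD [X in _ + X]traceD traceD.
have -> : trace e phi (fun c => R0 br D (pp G c) (pm G a) (pm G b)) = 0.
  apply: (vanish (pm G)) => //.
  - exact: pmlin.
  - apply: R0tens; [exact: pplin | by move=> c; rewrite gppm].
  - by move=> c; rewrite (fixm (R0m _ _ _)).2.
  - by move=> c; rewrite (fixm (Gpm c)).1 R0_10.
have -> : trace e phi (fun c => R0 br D (pm G c) (pp G a) (pp G b)) = 0.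
  apply: (vanish (pp G)) => //.
  - exact: pplin.
  - apply: R0tens; [exact: pmlin | by move=> c; rewrite gpmpp].
  - by move=> c; rewrite (fixp (R0p _ _ _)).1.
  - by move=> c; rewrite (fixp (Gpp c)).2 R0_10.
by rewrite !addr0.
Qed.

Lemma PGa a b : Pt (G a) b = - Pt a b.
Proof. by rewrite /Pt -traceN; apply: trace_ext => c; rewrite pmG R0_2N. Qed.
Lemma PGb a b : Pt a (G b) = Pt a b.
Proof. by rewrite /Pt; apply: trace_ext => c; rewrite ppG. Qed.
Lemma MGa a b : Mt (G a) b = Mt a b.
Proof. by rewrite /Mt; apply: trace_ext => c; rewrite ppG. Qed.
Lemma MGb a b : Mt a (G b) = - Mt a b.
Proof. by rewrite /Mt -traceN; apply: trace_ext => c; rewrite pmG R0_3N. Qed.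

Lemma main_sec :
  (forall a b, Ric e phi br D G a (G b) = - Ric e phi br D G (G a) b) /\
  ((forall a b, RicGF' e phi br D G a b = - RicGF' e phi br D G b a) <->
   (forall a b, Ric e phi br D G a b = Ric e phi br D G b a)).
Proof.
have GFE a b : RicGF' e phi br D G a b = Pt a b - Mt a b by [].
split.
  by move=> a b; rewrite !RicE PGa PGb MGa MGb; ring.
split=> H a b.
- have E := H (G a) b; rewrite !GFE PGa PGb MGa MGb in E.
  rewrite !RicE.
  have -> : Pt a b + Mt a b = - (- Pt a b - Mt a b) by ring.
  rewrite E; ring.
- have E := H (G a) b; rewrite !RicE PGa PGb MGa MGb in E.
  rewrite !GFE.
  have -> : Pt a b - Mt a b = - (- Pt a b + Mt a b) by ring.
  rewrite E; ring.
Qed.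

End S.

Theorem lemma4p4 (R : numFieldType) (A : comAlgType R) (V : lmodType A)
  (n : nat) (e : 'I_n -> V) (phi : 'I_n -> V -> A)
  (g : V -> V -> A) (rho : V -> A -> A) (br : V -> V -> V)
  (G : V -> V) (div : V -> A) (D : V -> V -> V) :
  dual_basis e phi ->
  is_Courant g rho br ->
  is_gen_metric g G ->
  is_divergence rho div ->
  is_gen_connection g rho D ->
  is_metric_conn G D ->
  has_divergence e phi D div ->
  pure_type_torsion g br D G ->
  (forall a b, Ric e phi br D G a (G b) = - Ric e phi br D G (G a) b) /\
  ((forall a b, RicGF' e phi br D G a b = - RicGF' e phi br D G b a) <->
   (forall a b, Ric e phi br D G a b = Ric e phi br D G b a)).
Proof.
move=> Hdb HC HG _ HD HM _ _.
exact: (@main_sec _ _ _ _ _ _ _ _ _ _ _ Hdb HC HG HD HM).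
Qed.
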